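(* Let $\Sigma$ be an alphabet with $|\Sigma|\geq 3$. Let $f\colon\mathcal{T}(\Sigma)\to\mathcal{T}(\Sigma)$ be WCP and such that $f(\Sigma)\subseteq\Sigma$. Then the restriction of $f$ to $\Sigma$ is either a constant function or the identity.
   Context: Let $\Sigma$ be an alphabet not containing $0,1$. A binary tree over $\Sigma$ is a finite set $t \subseteq \{0,1\}^*\Sigma$ such that for any $ua, vb \in t$ with $ua \neq vb$, $u$ is not a prefix of $v$ and $v$ is not a prefix of $u$; $\mathcal{T}(\Sigma)$ is the set of such trees, $\mathbf 0=\emptyset$, each letter $a$ is identified with $\{a\}$, and $t\star t' = 0.t\cup 1.t'$. Every map $h\colon\Sigma\to\mathcal{T}(\Sigma)$ extends uniquely to an endomorphism of $\langle\mathcal{T}(\Sigma),\star\rangle$, still denoted $h$. A function $g\colon\mathcal{T}(\Sigma)^n\to\mathcal{T}(\Sigma)$ is WCP if for every idempotent mapping $h\colon\Sigma\to\Sigma$ and all $\vec u,\vec v\in\Sigma^n$, $h(\vec u)=h(\vec v)$ implies $h(g(\vec u))=h(g(\vec v))$, where $h(\langle u_1,\ldots,u_n\rangle)=\langle h(u_1),\ldots,h(u_n)\rangle$ (here $n=1$). *)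

(* Defs.v *)
From mathcomp Require Import all_boot.
From mathcomp Require Import finmap.
Set Implicit Arguments. Unset Strict Implicit. Unset Printing Implicit Defensive.
Local Open Scope fset_scope.

(* A word of {0,1}^* Sigma is represented as a pair (u, a) with u : seq bool
   (false = 0, true = 1) and a : Sigma. The alphabet Sigma is a finite type,
   disjoint from {0,1} by construction. *)

Definition is_tree (S : finType) (t : {fset seq bool * S}) : bool :=
  [forall x : t, forall y : t,
     (val x != val y) ==> ~~ prefix (val x).1 (val y).1].

Record tree (S : finType) := Tree { tval :> {fset seq bool * S};
                                    tvalP : is_tree tval }.

Lemma letter_is_tree (S : finType) (a : S) : is_tree [fset ([::], a)].
Proof.
apply/forallP => x; apply/forallP => y.
case: x => [x Hx]; case: y => [y Hy] /=.
by move: Hx Hy; rewrite !inE => /eqP -> /eqP ->; rewrite eqxx.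
Qed.

Definition letter (S : finType) (a : S) : tree S := Tree (letter_is_tree a).

(* The unique extension of h : Sigma -> T(Sigma) to an endomorphism of
   <T(Sigma), star>:  h(t) = union over ua in t of u.h(a)
   (computed on the underlying finite sets). *)
Definition ext (S : finType) (h : S -> {fset seq bool * S})
    (t : {fset seq bool * S}) : {fset seq bool * S} :=
  \bigcup_(w <- t) [fset (w.1 ++ v.1, v.2) | v in h w.2].

(* WCP for a unary function g : T(Sigma) -> T(Sigma). An idempotent map
   h : Sigma -> Sigma is viewed as the map a |-> {h a} into T(Sigma). *)
Definition WCP (S : finType) (g : tree S -> tree S) : Prop :=
  forall h : S -> S, (forall a, h (h a) = h a) ->
  forall u v : S, h u = h v ->
    ext (fun a => tval (letter (h a))) (g (letter u))
    = ext (fun a => tval (letter (h a))) (g (letter v)).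

(* Main.v *)
Require Import Defs.
From mathcomp Require Import all_boot.
From mathcomp Require Import finmap.
From Stdlib Require Import ClassicalEpsilon.
Local Open Scope fset_scope.

Lemma ext_letter (S : finType) (h : S -> S) (b : S) :
  ext (fun a => Defs.tval (letter (h a))) (Defs.tval (letter b)) = [fset ([::], h b)].
Proof.
rewrite /ext /= big_seq_fset1 /=.
apply/fsetP => x; apply/imfsetP/idP.
  by case=> v /=; rewrite inE => /eqP -> ->; rewrite inE.
by rewrite inE => /eqP ->; exists ([::], h b); rewrite ?inE.
Qed.

Lemma fset1_inj' (T : choiceType) (x y : T) : [fset x] = [fset y] -> x = y.
Proof.
move=> E; have : x \in [fset y] by rewrite -E fset11.
  by rewrite inE => /eqP.
Qed.

Theorem mainTheorem8 (S : finType) (HS : 3 <= #|S|) (f : tree S -> tree S)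
  (Hf : WCP f) (Hsig : forall a : S, exists b : S, f (letter a) = letter b) :
  (exists c : S, forall a : S, f (letter a) = letter c) \/
  (forall a : S, f (letter a) = letter a).
Proof.
pose g a := proj1_sig (constructive_indefinite_description _ (Hsig a)).
have Hg a : f (letter a) = letter (g a).
  by rewrite /g; case: constructive_indefinite_description.
have pair a b : a != b ->
    g a = g b \/ (g a = a /\ g b = b) \/ (g a = b /\ g b = a).
  move=> ab.
  pose h x := if x == a then b else x.
  have hid x : h (h x) = h x.
    rewrite /h; case: (eqVneq x a) => [xa0|xa]; first subst x; last by rewrite !(negbTE xa).
    by case: ifP.
  have huv : h a = h b by rewrite /h eqxx eq_sym (negbTE ab).
  have := Hf h hid a b huv; rewrite !Hg !ext_letter => /fset1_inj' [].
  rewrite /h; case: (g a =P a) => ea; case: (g b =P a) => eb; try by [].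
  - by move=> _; left; rewrite ea eb.
  - by move=> E; right; left; split.
  - by move=> E; right; right; split.
  - by move=> E; left.
have key x y : x != y -> g x != g y -> g x = x.
  move=> xy gxy.
  have [z zx zy] : exists2 z, z != x & z != y.
    have /subsetPn [z _] : ~~ ([set: S] \subset [set x; y]).
      apply/negP => /subset_leq_card; rewrite cardsT cards2 xy.
      by move=> /(leq_trans HS).
    by rewrite !inE negb_or => /andP [] *; exists z.
  have := pair x y xy; have := pair z x zx; have := pair z y zy.
  move/eqP: xy => xy; move/eqP: zx => zx; move/eqP: zy => zy; move/eqP: gxy => gxy.
  intuition congruence.
have [c0 _] : exists c0 : S, true.
  by case: (pickP (fun _ : S => true)) => [c0 _|H]; [exists c0|
     move: HS; rewrite cardE; case: (enum S) (mem_enum S) => // c0 *; exists c0].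
have [/existsP [a0 /existsP [b0 nab]]|Hc] := boolP [exists a, exists b, g a != g b].
  right => x; rewrite Hg; congr letter.
  have [E|ne] := eqVneq (g x) (g a0).
    apply: (key x b0); first by apply: contraNneq nab => <-; rewrite E.
    by rewrite E.
  by apply: (key x a0 _ ne); apply: contraNneq ne => ->.
left; exists (g c0) => x; rewrite Hg; congr letter.
apply/eqP; apply: contraNT Hc => H; apply/existsP; exists x; apply/existsP; exists c0.
by [].
Qed.
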